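(* Let $L$ be a finite LC-loop and $x\in L$. Then the order of $x$ divides $|L|$.
   Context: An LC-loop is a loop satisfying $(xx)(yz)=(x(xy))z$ for all $x,y,z$; LC-loops are power associative, and the order of $x$ is the size of the subloop (cyclic group) generated by $x$, i.e. the least $n>0$ with $x^n=e$. *)

(* Defs.v *)
From mathcomp Require Import all_boot.
Set Implicit Arguments. Unset Strict Implicit. Unset Printing Implicit Defensive.

Definition is_loop (T : finType) (mul : T -> T -> T) (e : T) : Prop :=
  [/\ left_id e mul, right_id e mul,
      forall a, bijective (mul a) &
      forall a, bijective (fun y => mul y a)].

Definition LC_identity (T : Type) (mul : T -> T -> T) : Prop :=
  forall x y z, mul (mul x x) (mul y z) = mul (mul x (mul x y)) z.

Definition is_subloop (T : finType) (mul : T -> T -> T) (e : T) (S : {set T}) : bool :=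
  [&& e \in S,
      [forall a, forall b, ((a \in S) && (b \in S)) ==> (mul a b \in S)],
      [forall a, forall b, forall y, [&& a \in S, b \in S & mul a y == b] ==> (y \in S)] &
      [forall a, forall b, forall y, [&& a \in S, b \in S & mul y a == b] ==> (y \in S)]].

Definition gen_subloop (T : finType) (mul : T -> T -> T) (e : T) (x : T) : {set T} :=
  [set y | [forall S : {set T}, (is_subloop mul e S && (x \in S)) ==> (y \in S)]].

Definition loop_order (T : finType) (mul : T -> T -> T) (e : T) (x : T) : nat :=
  #|gen_subloop mul e x|.

(* Main.v *)
Require Import Defs.
From mathcomp Require Import all_boot.

Section LC.
Variables (T : finType) (mul : T -> T -> T) (e : T).
Hypotheses (hloop : is_loop mul e) (hLC : LC_identity mul).

Lemma sq_comm x w z : mul x (mul x (mul w z)) = mul (mul x (mul x w)) z.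
Proof.
case: hloop => lid rid _ _.
have H := hLC x (mul w z) e; rewrite !rid in H.
by rewrite -H -hLC.
Qed.

Lemma even_comm x j y z :
  iter (2 * j) (mul x) (mul y z) = mul (iter (2 * j) (mul x) y) z.
Proof.
elim: j => [|j IH]; first by [].
by rewrite mulnS iterD IH /= sq_comm.
Qed.

Lemma pow_mul x n z : mul (iter n (mul x) e) z = iter n (mul x) z.
Proof.
case: hloop => lid rid _ _.
rewrite -(odd_double_half n) -mul2n.
case: (odd n) => /=.
  rewrite add0n.
  have ->: mul x (iter (2 * n./2) (mul x) e) = iter (2 * n./2) (mul x) (mul x e) by rewrite -iterSr.
  by rewrite rid -even_comm -iterSr.
by rewrite add0n -even_comm lid.
Qed.

End LC.

Lemma order_le (T : finType) (f : T -> T) y k :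
  0 < k -> iter k f y = y -> order f y <= k.
Proof.
move=> k0 hk.
have lp : looping f y k.
  by rewrite /looping hk; case: k k0 {hk} => // k _; rewrite /= mem_head.
rewrite /order -(size_traject f y k).
apply: leq_trans (card_size _).
apply: subset_leq_card; apply/subsetP => z.
rewrite inE fconnect_orbit => /trajectP [i _ ->].
by move/loopingP: lp; apply.
Qed.

Theorem corollary4p7 (T : finType) (mul : T -> T -> T) (e : T)
  (hloop : is_loop mul e) (hLC : LC_identity mul) (x : T) :
  loop_order mul e x %| #|T|.
Proof.
have pw := @pow_mul _ _ _ hloop hLC x.
case: hloop => lid rid bl br.
set f := mul x.
have injf : injective f := bij_inj (bl x).
have injR a : injective (fun y => mul y a) := bij_inj (br a).
have ord_eq y : order f y = order f e.
  apply/eqP; rewrite eqn_leq; apply/andP; split.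
    apply: order_le => //.
    by rewrite -pw iter_order // lid.
  apply: order_le => //.
  have : mul (iter (order f y) f e) y = mul e y by rewrite pw iter_order // lid.
  by move/injR.
have cardT := @fcard_order_set T f injf (order f e) predT.
have {}cardT : fcard f predT * order f e = #|T|.
  apply: cardT => //.
  by apply/subsetP => y _; rewrite inE /= ord_eq.
have powE y : fconnect f e y -> exists i, y = iter i f e.
  by rewrite fconnect_orbit => /trajectP [i _ ->]; exists i.
pose S0 := [set y | fconnect f e y].
have mulS a b : a \in S0 -> b \in S0 -> mul a b \in S0.
  rewrite !inE => /powE [i ->] /powE [j ->].
  by rewrite pw -iterD fconnect_iter.
have subS : is_subloop mul e S0.
  apply/and4P; split.
  - by rewrite inE connect0.
  - apply/forallP=> a; apply/forallP=> b; apply/implyP => /andP [ha hb].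
    exact: mulS.
  - apply/forallP=> a; apply/forallP=> b; apply/forallP=> y; apply/implyP.
    rewrite !inE => /and3P [/powE [i ->] hb /eqP hy].
    rewrite pw in hy.
    have hyb : fconnect f y b by rewrite -hy fconnect_iter.
    have hbe : fconnect f b e by rewrite (fconnect_sym injf).
    rewrite (fconnect_sym injf).
    exact: connect_trans hyb hbe.
  - apply/forallP=> a; apply/forallP=> b; apply/forallP=> y; apply/implyP.
    move=> /and3P [ha hb /eqP hy].
    have eqS : [set mul z a | z in S0] = S0.
      apply/eqP; rewrite eqEcard card_imset ?leqnn ?andbT; last exact: injR.
      by apply/subsetP => w /imsetP [z hz ->]; apply: mulS hz ha.
    have hb' : b \in [set mul z a | z in S0] by rewrite eqS.
    case/imsetP: hb' => z hz.
    rewrite -hy => e1.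
    by rewrite (injR a y z e1).
have fe : f e = x by rewrite /f rid.
have xS : x \in S0 by rewrite inE -fe fconnect1.
have -> : loop_order mul e x = order f e.
  rewrite /loop_order /order; apply: eq_card => y.
  apply/idP/idP.
    rewrite inE => /forallP /(_ S0) /implyP H.
    by have := H (introT andP (conj subS xS)); rewrite inE.
  move=> /powE [i ->]; rewrite inE; apply/forallP => S; apply/implyP.
  case/andP => HS xS'.
  case/and4P: HS => eS /forallP mS _ _.
  elim: i => [|i IH] //=.
  by move: (mS x) => /forallP /(_ (iter i f e)) /implyP; apply; rewrite xS' IH.
by rewrite -cardT dvdn_mull.
Qed.
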